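(* Let $(X,E,\ell)$ be a uniformly connected and deterministic edge-labelled directed graph with label alphabet $\Sigma$, and let $F\subset\Sigma^+$ be a finite, non-empty set which is relatively dense in $(X,E,\ell)$. Then $$\sup_{x,y\in X}\mathsf h(L^F_{x,y})<\mathsf h(X).$$
   Context: $\Sigma$ is a finite alphabet, $\Sigma^*$ the set of finite words (including the empty word $\epsilon$), $\Sigma^+=\Sigma^*\setminus\{\epsilon\}$, $|w|$ the length of $w$. A factor of $a_1\cdots a_n$ is a word $a_i a_{i+1}\cdots a_j$, $1\le i\le j\le n$. For a language $L\subset\Sigma^*$, its entropy is $\mathsf h(L)=\limsup_{n\to\infty}\frac1n\log|\{w\in L:|w|=n\}|$, and for finite $F\subset\Sigma^+$, $L^F=\{w\in L:\text{no }v\in F\text{ is a factor of }w\}$. $(X,E,\ell)$ is a (possibly infinite) directed graph with vertex set $X$ whose edges $e=(x,a,y)$ have initial vertex $x$, terminal vertex $y$ and label $\ell(e)=a\in\Sigma$ (multiple edges and loops allowed, but two edges with the same endpoints have distinct labels). A path is a sequence of edges $e_1\cdots e_n$ with terminal vertex of $e_i$ equal to the initial vertex of $e_{i+1}$; its label is $\ell(e_1)\cdots\ell(e_n)$; the empty path at $x$ has label $\epsilon$. $L_{x,y}$ is the set of labels of all paths from $x$ to $y$, and $\mathsf h(X)=\sup_{x,y\in X}\mathsf h(L_{x,y})$. The graph is deterministic if for every vertex $x$ and $a\in\Sigma$ there is at most one edge with initial vertex $x$ and label $a$. It is strongly connected if there is a path between any ordered pair of vertices, and uniformly connected if it is strongly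 connected and there is $K$ such that for every edge from $x$ to $y$ there is a path from $y$ to $x$ of length at most $K$. The forward distance $d^+(x,y)$ is the minimal length of a path from $x$ to $y$. $F$ is relatively dense if there is $D$ such that for every $x\in X$ there are $y\in X$ and $w\in F$ with $d^+(x,y)\le D$ and a path starting at $y$ with label $w$. *)

(* Defs.v *)
From HB Require Import structures.
From mathcomp Require Import all_boot all_order all_algebra.
From mathcomp Require Import all_classical all_reals all_analysis.
Set Implicit Arguments. Unset Strict Implicit. Unset Printing Implicit Defensive.
Import Order.TTheory GRing.Theory Num.Theory.
Local Open Scope ring_scope.
Local Open Scope ereal_scope.

(* Since two edges with the same
   endpoints have distinct labels, an edge is determined by its triple. *)
Definition lgraph (X : Type) (Sigma : finType) := X -> Sigma -> X -> Prop.

Inductive path_lab (X : Type) (Sigma : finType) (E : lgraph X Sigma)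
  : X -> X -> seq Sigma -> Prop :=
| path_nil x : path_lab E x x [::]
| path_cons x a z y w : E x a z -> path_lab E z y w -> path_lab E x y (a :: w).

Definition Lxy (X : Type) (Sigma : finType) (E : lgraph X Sigma) (x y : X)
  : seq Sigma -> Prop := fun w => path_lab E x y w.

Definition avoid (Sigma : finType) (L : seq Sigma -> Prop) (F : seq (seq Sigma))
  : seq Sigma -> Prop := fun w => L w /\ (forall v, v \in F -> ~~ infix v w).

Definition nwords (Sigma : finType) (L : seq Sigma -> Prop) (n : nat) : nat :=
  #|[set w : n.-tuple Sigma | `[< L (tval w) >] ]|.

Definition entropy (R : realType) (Sigma : finType) (L : seq Sigma -> Prop)
  : \bar R :=
  limn_esup (fun n => if nwords L n == 0%N then -oo
                      else ((ln (nwords L n)%:R / n%:R)%R)%:E).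

Definition graph_entropy (R : realType) (X : Type) (Sigma : finType)
  (E : lgraph X Sigma) : \bar R :=
  ereal_sup [set entropy R (Lxy E x y) | x in [set: X] & y in [set: X]].

Definition deterministic (X : Type) (Sigma : finType) (E : lgraph X Sigma) :=
  forall x a y1 y2, E x a y1 -> E x a y2 -> y1 = y2.

Definition strongly_connected (X : Type) (Sigma : finType) (E : lgraph X Sigma) :=
  forall x y, exists w, path_lab E x y w.

Definition uniformly_connected (X : Type) (Sigma : finType) (E : lgraph X Sigma) :=
  strongly_connected E /\
  exists K : nat, forall x a y, E x a y ->
    exists w, path_lab E y x w /\ (size w <= K)%N.

Definition fdist_le (X : Type) (Sigma : finType) (E : lgraph X Sigma)
  (x y : X) (D : nat) := exists w, path_lab E x y w /\ (size w <= D)%N.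

Definition relatively_dense (X : Type) (Sigma : finType) (E : lgraph X Sigma)
  (F : seq (seq Sigma)) :=
  exists D : nat, forall x, exists y w,
    fdist_le E x y D /\ w \in F /\ exists z, path_lab E y z w.

(* Main.v *)
Require Import Defs.
From HB Require Import structures.
From mathcomp Require Import all_boot all_order all_algebra.
From mathcomp Require Import all_classical all_reals all_analysis.
Local Open Scope ereal_scope.


From mathcomp Require Import ring lra zify.

Set Implicit Arguments. Unset Strict Implicit. Unset Printing Implicit Defensive.


Section Graph.
Variables (X : Type) (Sigma : finType) (E : lgraph X Sigma).

Definition step (x : X) (a : Sigma) : option X :=
  match pselect (exists y, E x a y) with
  | left h => Some (sval (cid h)) | right _ => None end.

Fixpoint endv (x : X) (w : seq Sigma) : option X :=
  match w with
  | [::] => Some x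
  | a :: w' => if step x a is Some z then endv z w' else None
  end.

Lemma endv_cat x s t :
  endv x (s ++ t) = if endv x s is Some z then endv z t else None.
Proof.
elim: s x => [//|a s IH] x /=.
by case: (step x a) => // z; rewrite IH.
Qed.

Definition vtx (x : X) (w : seq Sigma) : X :=
  if endv x w is Some z then z else x.

Lemma path_cat x y z s t :
  path_lab E x y s -> path_lab E y z t -> path_lab E x z (s ++ t).
Proof.
elim=> [//|x0 a z0 y0 w e _ IH] H /=.
by apply: path_cons e _; apply: IH.
Qed.

Hypothesis Hdet : deterministic E.

Lemma stepP x a y : E x a y <-> step x a = Some y.
Proof.
rewrite /step; case: pselect => [h|h]; split.
- move=> e; congr Some; apply: Hdet (svalP (cid h)) e.
- by case=> <-; exact: (svalP (cid h)).
- by move=> e; exfalso; apply: h; exists y.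
- by [].
Qed.

Lemma path_endv x y w : path_lab E x y w <-> endv x w = Some y.
Proof.
split.
  by elim=> [//|x0 a z0 y0 w0 e _ IH] /=; rewrite (proj1 (stepP _ _ _) e).
elim: w x => [|a w IH] x /=; first by case=> ->; exact: path_nil.
case h: (step x a) => [z|//] H.
by apply: path_cons (IH _ H); apply/stepP.
Qed.

End Graph.

Section Back.
Variables (X : Type) (Sigma : finType) (E : lgraph X Sigma) (K : nat).
Hypothesis HK : forall x a y, E x a y -> exists w, path_lab E y x w /\ (size w <= K)%N.

Lemma path_back x y w : path_lab E x y w ->
  exists w', path_lab E y x w' /\ (size w' <= K * size w)%N.
Proof.
elim=> [x0|x0 a z0 y0 w0 e _ [w1 [p1 s1]]].
  by exists [::]; split => //; exact: path_nil.
have [w2 [p2 s2]] := HK e.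
exists (w1 ++ w2); split; first exact: path_cat p1 p2.
rewrite size_cat /= mulnS addnC; exact: leq_add.
Qed.
End Back.


Section Phi.
Variables (X : Type) (Sigma : finType) (E : lgraph X Sigma) (F : seq (seq Sigma)).

Definition hasF (s : seq Sigma) : bool := has (fun f => infix f s) F.

Lemma hasF_infix s t : infix s t -> hasF s -> hasF t.
Proof. by move=> st /hasP[f fF fs]; apply/hasP; exists f => //; apply: infix_trans fs st. Qed.

Lemma infix_take a (s : seq Sigma) : infix (take a s) s.
Proof. by rewrite -{2}(cat_take_drop a s) prefix_infix. Qed.

Lemma infix_drop a (s : seq Sigma) : infix (drop a s) s.
Proof. by rewrite -{2}(cat_take_drop a s) suffix_infix. Qed.

Lemma hasF_take_mono a b v : (a <= b)%N -> hasF (take a v) -> hasF (take b v).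
Proof.
move=> ab; apply: hasF_infix; rewrite -(take_takel v ab); exact: infix_take.
Qed.

Definition fo (v : seq Sigma) : nat :=
  find (fun e => hasF (take e v)) (iota 0 (size v).+1).

Lemma fo_spec p q v : ~~ hasF (take p v) -> hasF (take q v) -> (q <= size v)%N ->
  (p < fo v <= q)%N.
Proof.
move=> np hq qs.
have qlt : (q < size (iota 0 (size v).+1))%N by rewrite size_iota ltnS.
have foq : (fo v <= q)%N.
  rewrite leqNgt; apply/negP => /(before_find 0%N).
  by rewrite nth_iota ?ltnS // add0n hq.
rewrite foq andbT ltnNge; apply/negP => fp.
have hh : has (fun e => hasF (take e v)) (iota 0 (size v).+1).
  by rewrite has_find /fo; apply: leq_ltn_trans qlt.
have := nth_find 0%N hh; rewrite -/(fo v) nth_iota ?add0n; last first.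
  by rewrite ltnS (leq_trans foq qs).
by move/(hasF_take_mono fp); rewrite (negbTE np).
Qed.

Variables (dt : X -> seq Sigma) (M L : nat).
Hypothesis dt_size : forall v, (size (dt v) <= M)%N.
Hypothesis dt_pos : forall v, (0 < size (dt v))%N.
Hypothesis dt_F : forall v, hasF (dt v).

Fixpoint Phi (x : X) (u : seq Sigma) (fs : seq nat) : seq Sigma :=
  match fs with
  | [::] => u
  | f :: fs' => take f u ++ dt (vtx E x (take f u)) ++ drop f (take L u)
               ++ Phi (vtx E x (take L u)) (drop L u) fs'
  end.

Fixpoint pcode (x : X) (u : seq Sigma) (fs : seq nat) : seq nat :=
  match fs with
  | [::] => [::]
  | f :: fs' => minn (fo (Phi x u fs) - f) M :: pcode (vtx E x (take L u)) (drop L u) fs'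
  end.

Lemma size_code x u fs : size (pcode x u fs) = size fs.
Proof. by elim: fs x u => //= f fs IH x u; rewrite IH. Qed.

Lemma code_le x u fs : all (fun c => c <= M)%N (pcode x u fs).
Proof. by elim: fs x u => //= f fs IH x u; rewrite IH geq_minr. Qed.

Lemma Phi_head x u f fs : (f < L)%N -> (L <= size u)%N -> ~~ hasF u ->
  (f < fo (Phi x u (f :: fs)) <= f + M)%N.
Proof.
move=> fL Lu nu.
have fu : (f <= size u)%N by apply: leq_trans (ltnW fL) Lu.
have sp : size (take f u) = f by rewrite size_takel.
set v := Phi x u (f :: fs).
have e1 : take f v = take f u by rewrite /v /= take_size_cat.
set d := dt (vtx E x (take f u)).
have e2 : take (f + size d) v = take f u ++ d.
  by rewrite /v /= -/d catA take_size_cat // size_cat sp.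
have H3 : ~~ hasF (take f v).
  rewrite e1; apply/negP => /hasF_infix; move/(_ u (infix_take _ _)); by rewrite (negbTE nu).
have H4 : hasF (take (f + size d) v).
  by rewrite e2; apply: hasF_infix (dt_F _); exact: suffix_infix.
have H5 : (f + size d <= size v)%N.
  by rewrite /v /= -/d catA size_cat size_cat sp leq_addr.
case/andP: (fo_spec H3 H4 H5).
move=> -> /= h; apply: leq_trans h _; rewrite leq_add2l; exact: dt_size.
Qed.

Lemma nhasF_take a u : ~~ hasF u -> ~~ hasF (take a u).
Proof. by apply: contra; apply: hasF_infix; exact: infix_take. Qed.
Lemma nhasF_drop a u : ~~ hasF u -> ~~ hasF (drop a u).
Proof. by apply: contra; apply: hasF_infix; exact: infix_drop. Qed.

Lemma Phi_inj fs : forall fs' x u u', size fs = size fs' ->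
  all (fun f => f < L)%N fs -> all (fun f => f < L)%N fs' ->
  (L * size fs <= size u)%N -> (L * size fs' <= size u')%N ->
  ~~ hasF u -> ~~ hasF u' ->
  Phi x u fs = Phi x u' fs' -> pcode x u fs = pcode x u' fs' -> u = u' /\ fs = fs'.
Proof.
elim: fs => [|f fs IH] [|f' fs'] x u u' //=.
move=> [sz] /andP[fL aL] /andP[fL' aL'] su su' nu nu' eP [ec ecs].
have Lu : (L <= size u)%N by apply: leq_trans su; rewrite mulnS leq_addr.
have Lu' : (L <= size u')%N by apply: leq_trans su'; rewrite mulnS leq_addr.
have h1 := Phi_head x fs fL Lu nu.
have h2 := Phi_head x fs' fL' Lu' nu'.
move: ec h1 h2; rewrite /= eP => ec h1 h2.
have ff : f = f' by lia.
subst f'.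
have fu : (f <= size u)%N by apply: leq_trans (ltnW fL) Lu.
have fu' : (f <= size u')%N by apply: leq_trans (ltnW fL) Lu'.
have ep : take f u = take f u'.
  by move: (congr1 (take f) eP); rewrite !take_size_cat // size_takel.
move: eP; rewrite ep => /eqP; rewrite eqseq_cat // => /andP[_ /eqP].
move/eqP; rewrite eqseq_cat // => /andP[_ /eqP].
move/eqP; rewrite eqseq_cat; last first.
  by rewrite !size_drop !size_takel.
case/andP => /eqP es /eqP er.
have eL : take L u = take L u'.
  by rewrite -(cat_take_drop f (take L u)) -(cat_take_drop f (take L u'))
     !take_takel ?(ltnW fL) // ep es.
move: er ecs; rewrite eL => er ecs.
have [d1 d2] : drop L u = drop L u' /\ fs = fs'.
  apply: (IH fs' _ _ _ sz aL aL' _ _ (nhasF_drop _ nu) (nhasF_drop _ nu') er ecs).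
    by rewrite size_drop leq_subRL // -mulnS.
  by rewrite size_drop leq_subRL // -mulnS.
split; last by rewrite d2.
by rewrite -(cat_take_drop L u) -(cat_take_drop L u') eL d1.
Qed.


Lemma endv_some x s t y : endv E x (s ++ t) = Some y ->
  exists z, endv E x s = Some z /\ endv E z t = Some y.
Proof. by rewrite endv_cat; case: (endv E x s) => // z h; exists z. Qed.

Hypothesis dt_loop : forall v, endv E v (dt v) = Some v.

Lemma Phi_path fs : forall x u y, all (fun f => f < L)%N fs ->
  (L * size fs <= size u)%N -> endv E x u = Some y -> endv E x (Phi x u fs) = Some y.
Proof.
elim: fs => [//|f fs IH] x u y /= /andP[fL aL] su eu.
have Lu : (L <= size u)%N by apply: leq_trans su; rewrite mulnS leq_addr.
have [w [ew1 ew2]] : exists w, endv E x (take L u) = Some w /\ endv E w (drop L u) = Some y.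
  by apply: endv_some; rewrite cat_take_drop.
have [v [ev1 ev2]] : exists v, endv E x (take f u) = Some v /\
    endv E v (drop f (take L u)) = Some w.
  by apply: endv_some; rewrite -{1}(take_takel u (ltnW fL)) cat_take_drop.
rewrite endv_cat ev1 /vtx ev1 endv_cat dt_loop endv_cat ev2 ew1.
apply: IH => //; first by rewrite size_drop leq_subRL // -mulnS.
Qed.

Lemma size_Phi fs : forall x u, all (fun f => f < L)%N fs ->
  (L * size fs <= size u)%N ->
  (size u + size fs <= size (Phi x u fs) <= size u + size fs * M)%N.
Proof.
elim: fs => [|f fs IH] x u /=; first by rewrite !addn0 leqnn.
move=> /andP[fL aL] su.
have Lu : (L <= size u)%N by apply: leq_trans su; rewrite mulnS leq_addr.
have su' : (L * size fs <= size (drop L u))%N by rewrite size_drop leq_subRL // -mulnS.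
have := IH (vtx E x (take L u)) (drop L u) aL su'.
have := dt_size (vtx E x (take f u)); have := dt_pos (vtx E x (take f u)).
rewrite !size_cat size_drop !size_takel ?(leq_trans (ltnW fL) Lu) //.
rewrite size_drop.
move: (size (dt _)) (size (Phi _ _ _)) => a b.
rewrite size_takel // mulSn; nia.
Qed.

End Phi.


Section Count.
Variables (X : Type) (Sigma : finType) (E : lgraph X Sigma) (F : seq (seq Sigma)).
Variables (dt : X -> seq Sigma) (M L : nat).
Hypothesis dt_size : forall v, (size (dt v) <= M)%N.
Hypothesis dt_pos : forall v, (0 < size (dt v))%N.
Hypothesis dt_F : forall v, hasF F (dt v).
Hypothesis dt_loop : forall v, endv E v (dt v) = Some v.
Hypothesis Hdet : deterministic E.
Hypothesis L_gt0 : (0 < L)%N.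

Lemma avoid_hasF (K : seq Sigma -> Prop) w : avoid K F w -> K w /\ ~~ hasF F w.
Proof. by case=> h1 h2; split => //; apply/hasPn => v /h2. Qed.

Lemma insub_eq k (s1 s2 : seq Sigma) : size s1 = k -> size s2 = k ->
  (insub s1 : option (k.-tuple Sigma)) = insub s2 -> s1 = s2.
Proof.
move=> /eqP h1 /eqP h2; rewrite (insubT (fun s => size s == k) h1) (insubT (fun s => size s == k) h2).
by case.
Qed.

Lemma count_main x y n :
  exists k, (n <= k <= n + (n %/ L) * M)%N /\
   (nwords (avoid (Lxy E x y) F) n * L ^ (n %/ L) <=
    (n + (n %/ L) * M).+1 * nwords (Lxy E x y) k * M.+1 ^ (n %/ L))%N.
Proof.
set j := n %/ L; set N := (n + j * M).+1.
set A := [set w : n.-tuple Sigma | `[< avoid (Lxy E x y) F (tval w) >]].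
set Dom := finset.setX A [set: j.-tuple 'I_L].
pose Psi (z : n.-tuple Sigma * j.-tuple 'I_L) : seq Sigma :=
  Phi E dt L x (tval z.1) (map val (tval z.2)).
have cDom : #|Dom| = (nwords (avoid (Lxy E x y) F) n * L ^ j)%N.
  by rewrite cardsX cardsT card_tuple card_ord.
have jn : (L * j <= n)%N by rewrite mulnC leq_trunc_div.
have allL (t : j.-tuple 'I_L) : all (fun f => f < L)%N (map val (tval t)).
  by apply/allP => f /mapP[i _ ->]; exact: ltn_ord.
have szm (t : j.-tuple 'I_L) : size (map val (tval t)) = j by rewrite size_map size_tuple.
have inDom z : z \in Dom -> [/\ path_lab E x y (tval z.1), ~~ hasF F (tval z.1),
    path_lab E x y (Psi z) & (n + j <= size (Psi z) <= n + j * M)%N].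
  case: z => u t; rewrite inE /= inE => /andP[/asboolP /avoid_hasF [pu nu] _].
  have hs : (L * size (map val (tval t)) <= size (tval u))%N by rewrite szm size_tuple.
  split => //.
    apply/path_endv => //; apply: Phi_path => //.
    exact/path_endv.
  have := size_Phi E dt_size dt_pos x (allL t) hs.
  by rewrite szm size_tuple.
pose p z : 'I_N := inord (size (Psi z)).
pose D (k : 'I_N) := [set z in Dom | p z == k].
have part : #|Dom| = (\sum_(k < N) #|D k|)%N.
  rewrite -sum1_card (partition_big p predT) //=; apply: eq_bigr => k _.
  by rewrite -sum1_card; apply: eq_bigl => z; rewrite !inE.
have [k0 hk0] := eq_bigmax (fun k : 'I_N => #|D k|) (ltac:(by rewrite card_ord)).
have le1 : (#|Dom| <= N * #|D k0|)%N.
  rewrite (_ : #|D k0| = \max_(k < N) #|D k|); last by rewrite hk0.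
  have -> : (N * (\max_(k < N) #|D k|) = \sum_(k < N) (\max_(k < N) #|D k|))%N.
    by rewrite sum_nat_const card_ord mulnC.
  by rewrite part; apply: leq_sum => k _; exact: leq_bigmax.
have [Dom0 | DomP] := eqVneq #|Dom| 0%N.
  by exists n; rewrite leqnn leq_addr /= -cDom Dom0.
have : (0 < #|D k0|)%N.
  rewrite lt0n; apply: contra DomP => /eqP h.
  by rewrite -leqn0 (leq_trans le1) // h muln0.
rewrite card_gt0 => /set0Pn [z0].
rewrite inE => /andP[z0D /eqP pz0].
have [_ _ _ hs0] := inDom _ z0D.
have ek0 : (k0 : nat) = size (Psi z0).
  by rewrite -pz0 /p inordK // ltnS; case/andP: hs0.
set k := nat_of_ord k0.
have szD z' : z' \in D k0 -> z' \in Dom /\ size (Psi z') = k.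
  rewrite inE => /andP[zD /eqP pz]; split => //.
  have [_ _ _ /andP[_ hs]] := inDom _ zD.
  by rewrite /k -pz /p inordK // ltnS.
pose cd (z : n.-tuple Sigma * j.-tuple 'I_L) := pcode E F dt M L x (tval z.1) (map val (tval z.2)).
pose g z : option (k.-tuple Sigma) * j.-tuple 'I_M.+1 :=
  (insub (Psi z), [tuple (inord (nth 0%N (cd z) i) : 'I_M.+1) | i < j]).
pose Bo := [set o : option (k.-tuple Sigma) |
             if o is Some t then `[< Lxy E x y (tval t) >] else false].
pose B := finset.setX Bo [set: j.-tuple 'I_M.+1].
have cB : #|B| = (nwords (Lxy E x y) k * M.+1 ^ j)%N.
  rewrite cardsX cardsT card_tuple card_ord; congr (_ * _)%N.
  rewrite /nwords -[RHS](card_imset _ (@Some_inj _)); apply: eq_card => -[t|]; rewrite !inE.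
    by rewrite mem_imset ?inE //; exact: Some_inj.
  by apply/esym/negbTE/imsetP => -[].
have sub : g @: D k0 \subset B.
  apply/fintype.subsetP => _ /imsetP[z' zD' ->]; rewrite !inE /= andbT.
  have [zD hs] := szD _ zD'.
  have [_ _ pth _] := inDom _ zD.
  move/eqP: hs => hs; rewrite (insubT (fun s => size s == k) hs) /=.
  exact/asboolP.
have inj : {in D k0 &, injective g}.
  move=> [u1 t1] [u2 t2] /szD[d1 s1] /szD[d2 s2] E12.
  have e1 := insub_eq s1 s2 (congr1 fst E12); have e2 := congr1 snd E12.
  have [_ n1 _ _] := inDom _ d1; have [_ n2 _ _] := inDom _ d2.
  have ec : cd (u1, t1) = cd (u2, t2).
    apply: (@eq_from_nth _ 0%N); first by rewrite !size_code !szm.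
    move=> i; rewrite size_code szm => ilt.
    have := congr1 (fun t => val (tnth t (Ordinal ilt))) e2.
    rewrite /= !tnth_mktuple /= !inordK // ltnS.
    + apply: (allP (code_le E F dt M L x (tval u2) (map val (tval t2)))).
      by apply: mem_nth; rewrite size_code szm.
    + apply: (allP (code_le E F dt M L x (tval u1) (map val (tval t1)))).
      by apply: mem_nth; rewrite size_code szm.
  have hs1 : (L * size (map val (tval t1)) <= size (tval u1))%N by rewrite szm size_tuple.
  have hs2 : (L * size (map val (tval t2)) <= size (tval u2))%N by rewrite szm size_tuple.
  have sz12 : size (map val (tval t1)) = size (map val (tval t2)) by rewrite !szm.
  have [eu et] := Phi_inj dt_size dt_F sz12 (allL t1) (allL t2)
    hs1 hs2 n1 n2 e1 ec.
  by congr pair; apply: val_inj => //; apply: (inj_map val_inj).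
have cD : (#|D k0| <= nwords (Lxy E x y) k * M.+1 ^ j)%N.
  by rewrite -cB -(card_in_imset inj); exact: subset_leq_card.
exists k; split.
  by rewrite /k ek0; case/andP: hs0 => h1 ->; rewrite (leq_trans _ h1) // leq_addr.
rewrite -cDom -mulnA; apply: (leq_trans le1); rewrite leq_mul2l cD orbT //.
Qed.
End Count.

Import Order.TTheory GRing.Theory Num.Theory.

Section Wrap0.
Local Open Scope ring_scope.

Lemma ln_bound (R : realType) (x T : R) : 0 < x -> 0 < T -> ln x <= ln T + x / T.
Proof.
move=> x0 T0.
have -> : x = T * (x / T) by field; rewrite gt_eqF.
rewrite lnM ?posrE ?divr_gt0 // lerD2l.
have -> : T * (x / T) / T = x / T by field; rewrite gt_eqF.
by apply/ltW/ln_sublinear/divr_gt0.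
Qed.

Lemma real_core (R : realType) (H r : R) (M L j n k a b : nat) :
  0 <= r -> r <= H -> (0 < L)%N -> (1 <= M)%N -> (1 <= n)%N ->
  (j * L <= n)%N -> (n < j.+1 * L)%N -> (n <= k)%N -> (k <= n + j * M)%N -> (0 < a)%N ->
  (a * L ^ j <= (n + j * M).+1 * b * M.+1 ^ j)%N ->
  r * n%:R <= ln (a%:R : R) ->
  2 + ln (M.+1%:R : R) + (H + 1) * M%:R <= ln (L%:R : R) ->
  2 * L%:R * (2 + ln (2 * L%:R * (M%:R + 2) : R)) <= n%:R ->
  (0 < b)%N /\ (r + L%:R^-1) * k%:R <= ln (b%:R : R).
Proof.
move=> r0 rH L0 M1 n1 jLn nLj nk kn a0 hab hra hL hn.
have b0 : (0 < b)%N.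
  have pos : (0 < a * L ^ j)%N by rewrite muln_gt0 a0 expn_gt0 L0.
  rewrite lt0n; apply/negP => /eqP b0; move: hab; rewrite b0 muln0 mul0n leqn0 => /eqP h.
  by rewrite h in pos.
split => //.
set N := (n + j * M).+1 in hab.
have lnab : ln (a%:R : R) + j%:R * ln (L%:R : R) <=
            ln (N%:R : R) + ln (b%:R : R) + j%:R * ln (M.+1%:R : R).
  have pa : (0 : R) < a%:R * L%:R ^+ j by rewrite mulr_gt0 ?exprn_gt0 ?ltr0n.
  have pb : (0 : R) < N%:R * b%:R * M.+1%:R ^+ j by rewrite !mulr_gt0 ?exprn_gt0 ?ltr0n.
  have h2 : ln (a%:R * L%:R ^+ j : R) <= ln (N%:R * b%:R * M.+1%:R ^+ j).
    rewrite (ler_ln (x:=_) (y:=_)) ?posrE //.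
    move: hab; rewrite -(ler_nat R) !natrM !natrX => h; exact: h.
  move: h2; rewrite lnM ?posrE ?exprn_gt0 ?ltr0n // lnM ?posrE ?mulr_gt0 ?exprn_gt0 ?ltr0n //.
  rewrite lnM ?posrE ?ltr0n // !lnXn ?ltr0n // !mulr_natl.
  by [].
set T : R := 2 * L%:R * (M%:R + 2).
have T0 : 0 < T by rewrite /T !mulr_gt0 ?ltr0n // addr_gt0 ?ltr0n.
have lnN : ln (N%:R : R) <= ln T + N%:R / T by apply: ln_bound; rewrite ?ltr0n.
have jn : (j <= n)%N.
  by apply: leq_trans jLn; rewrite leq_pmulr.
have NnM : (N <= n * (M + 2))%N.
  rewrite /N; have : (j * M <= n * M)%N by rewrite leq_mul2r jn orbT.
  lia.
have NnMR : (N%:R : R) <= n%:R * (M%:R + 2).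
  by have := NnM; rewrite -(ler_nat R) natrM natrD.
have Lpos : 0 < (L%:R : R) by rewrite ltr0n.
have NT : N%:R / T <= n%:R / (2 * L%:R).
  rewrite ler_pdivrMr // /T.
  have -> : n%:R / (2 * L%:R) * (2 * L%:R * (M%:R + 2)) = n%:R * (M%:R + 2) :> R.
    by field; rewrite gt_eqF.
  exact: NnMR.
have jR : (n%:R : R) < (j%:R + 1) * L%:R.
  by move: nLj; rewrite -(ltr_nat R) natrM -natr1.
have jLR : (j%:R : R) * L%:R <= n%:R by rewrite -natrM ler_nat.
have kR : (k%:R : R) <= n%:R + j%:R * M%:R by rewrite -natrM -natrD ler_nat.
have nkR : (n%:R : R) <= k%:R by rewrite ler_nat.
have M1R : 1 <= (M%:R : R) by rewrite ler1n.
set l := ln (L%:R : R) in hL lnab *.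
set m := ln (M.+1%:R : R) in hL lnab.
set d : R := L%:R^-1.
have dL : d * L%:R = 1 by rewrite /d mulVf // gt_eqF.
have d0 : 0 < d by rewrite /d invr_gt0.
have d1 : d <= 1 by rewrite /d invf_le1 // ler1n.
have jd : (j%:R : R) + 1 >= n%:R * d.
  have : n%:R * d < (j%:R + 1) * L%:R * d by rewrite ltr_pM2r.
  by rewrite -mulrA (mulrC (L%:R)) dL mulr1 => /ltW.
have j0 : 0 <= (j%:R : R) by rewrite ler0n.
have M0 : 0 <= (M%:R : R) by rewrite ler0n.
have e1 : j%:R * (2 + m + (H + 1) * M%:R) <= j%:R * l by rewrite ler_wpM2l.
have rd0 : 0 <= r + d by lra.
have e2 : (r + d) * k%:R <= (r + d) * (n%:R + j%:R * M%:R) by rewrite ler_wpM2l.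
have e3 : (r + d) * (j%:R * M%:R) <= (H + 1) * (j%:R * M%:R).
  by rewrite ler_wpM2r ?mulr_ge0 //; lra.
have e4 : n%:R / (2 * L%:R) = n%:R * d / 2 :> R.
  by rewrite /d; field; rewrite gt_eqF.
have e5 : 2 + ln T <= n%:R * d / 2.
  have := ler_wpM2r (ltW (divr_gt0 d0 (ltr0n R 2))) hn.
  have -> : 2 * L%:R * (2 + ln T) * (d / 2) = (2 + ln T) * (d * L%:R) by field.
  by rewrite dL mulr1 mulrA.
rewrite e4 in NT.
nra.
Qed.

End Wrap0.

Section Wrap1.
Local Open Scope classical_set_scope.
Local Open Scope ring_scope.

Lemma esup_gt (R : realType) (u : nat -> \bar R) (r : \bar R) :
  (r < limn_esup u)%E -> forall N, exists2 n, (N <= n)%N & (r < u n)%E.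
Proof.
move=> h N; case: (pselect (exists2 n, (N <= n)%N & (r < u n)%E)) => // H; exfalso.
have Hle n : (N <= n)%N -> (u n <= r)%E.
  by move=> Nn; rewrite leNgt; apply/negP => rn; apply: H; exists n.
have : (limn_esup u <= r)%E.
  rewrite /limn_esup /limf_esup.
  apply: (le_trans (ereal_inf_lbound _)).
    by exists [set n | (N <= n)%N] => //; exists N.
  by apply: ge_ereal_sup => _ [n Nn <-]; exact: Hle.
by rewrite leNgt h.
Qed.

Lemma esup_ge (R : realType) (u : nat -> \bar R) (r : \bar R) :
  (forall N, exists2 n, (N <= n)%N & (r <= u n)%E) -> (r <= limn_esup u)%E.
Proof.
move=> H; rewrite /limn_esup /limf_esup.
apply: le_ereal_inf_tmp => _ [V [N _ HN] <-].
have [n Nn rn] := H N.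
apply: le_ereal_sup_tmp; exists (u n) => //; exists n => //; exact: HN.
Qed.

Section Ent.
Variables (R : realType) (Sigma : finType).

Lemma nwords_le (L : seq Sigma -> Prop) n : (nwords L n <= #|Sigma| ^ n)%N.
Proof. by rewrite /nwords -card_tuple; apply: max_card. Qed.

Lemma entropy_ge_of (L : seq Sigma -> Prop) (r : R) :
  (forall N, exists2 n, (N <= n)%N & nwords L n != 0%N /\ r <= ln (nwords L n)%:R / n%:R) ->
  (r%:E <= entropy R L)%E.
Proof.
move=> H; apply: esup_ge => N; have [n Nn [h1 h2]] := H N; exists n => //.
by rewrite (negbTE h1) lee_fin.
Qed.

Lemma entropy_gt_to (L : seq Sigma -> Prop) (r : R) : (r%:E < entropy R L)%E ->
  forall N, exists2 n, (N <= n)%N & nwords L n != 0%N /\ r < ln (nwords L n)%:R / n%:R.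
Proof.
move=> /esup_gt H N; have [n Nn rn] := H N; exists n => //.
move: rn; case: eqP => [_|/eqP h]; first by rewrite ltNge leNye.
by rewrite lte_fin.
Qed.

Lemma term_le (L : seq Sigma -> Prop) n : nwords L n != 0%N ->
  ln (nwords L n)%:R / n%:R <= ln (#|Sigma|.+1%:R : R).
Proof.
move=> h.
have H0 : 0 <= ln (#|Sigma|.+1%:R : R) by rewrite ln_ge0 // ler1n.
have [->|n0] := eqVneq n 0%N; first by rewrite invr0 mulr0.
rewrite ler_pdivrMr ?ltr0n ?lt0n // mulr_natr -lnXn ?ltr0n //.
rewrite ler_ln ?posrE ?exprn_gt0 ?ltr0n ?lt0n // -natrX ler_nat.
apply: leq_trans (nwords_le L n) _; rewrite leq_exp2r ?lt0n //.
Qed.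

Lemma entropy_le (L : seq Sigma -> Prop) : (entropy R L <= (ln (#|Sigma|.+1%:R : R))%:E)%E.
Proof.
rewrite leNgt; apply/negP => /entropy_gt_to /(_ 0%N) [n _ [h1 h2]].
by have := term_le h1; rewrite leNgt h2.
Qed.

Lemma term_ge0 (L : seq Sigma -> Prop) n : nwords L n != 0%N ->
  0 <= ln (nwords L n)%:R / n%:R :> R.
Proof. by move=> h; rewrite divr_ge0 // ln_ge0 // ler1n lt0n. Qed.

End Ent.

End Wrap1.

Section Wrap2.
Local Open Scope classical_set_scope.
Local Open Scope ring_scope.

Lemma dt_ex (X : Type) (Sigma : finType) (E : lgraph X Sigma) (F : seq (seq Sigma))
  (Hdet : deterministic E) (K : nat)
  (HK : forall x a y, E x a y -> exists w, path_lab E y x w /\ (size w <= K)%N)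
  (D : nat)
  (Hd : forall x, exists y w, fdist_le E x y D /\ w \in F /\ exists z, path_lab E y z w)
  (HF_plus : forall w, w \in F -> w != [::]) v :
  exists d, [/\ endv E v d = Some v, (0 < size d)%N,
     (size d <= (D + \max_(w <- F) size w) * K.+1)%N & hasF F d].
Proof.
have [y [w [[p [pp sp]] [wF [z pw]]]]] := Hd v.
have pvz := path_cat pp pw.
have [ret [pr sr]] := path_back HK pvz.
exists (p ++ w ++ ret); split.
- by apply/path_endv => //; rewrite catA; exact: path_cat pvz pr.
- by rewrite !size_cat; have := HF_plus w wF; case: w {pw pvz pr sr wF} => //= *; lia.
- have wm : (size w <= \max_(w <- F) size w)%N by apply: leq_bigmax_seq.
  move: sr; rewrite !size_cat => sr.
  have : (K * (size p + size w) <= K * (D + \max_(w0 <- F) size w0))%N.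
    by rewrite leq_mul2l leq_add ?orbT.
  move: (\max_(w0 <- F) size w0) wm => mm wm h.
  rewrite mulnS (mulnC (D + mm)%N); set a1 := size p in sr h sp *; set a2 := size w in sr h wm *; set a3 := size ret in sr *; nia.
- by apply/hasP; exists w => //; exact: infix_infix.
Qed.

Lemma cycle_entropy (R : realType) (X : Type) (Sigma : finType) (E : lgraph X Sigma)
  (Hdet : deterministic E) v d : endv E v d = Some v -> (0 < size d)%N ->
  (0 <= entropy R (Lxy E v v))%E.
Proof.
move=> ed d0; apply: (@entropy_ge_of R Sigma _ 0) => N.
pose w := flatten (nseq N d).
have sw : size w = (N * size d)%N.
  by rewrite /w; elim: (N) => //= N' IH; rewrite size_cat IH mulSn.
have ew : endv E v w = Some v.
  by rewrite /w; elim: (N) => //= N' IH; rewrite endv_cat ed.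
have nz : nwords (Lxy E v v) (N * size d) != 0%N.
  rewrite /nwords -lt0n card_gt0; apply/set0Pn.
  have szw : size w == (N * size d)%N by rewrite sw.
  exists (@Tuple _ Sigma w szw); rewrite inE; apply/asboolP.
  by apply/path_endv.
exists (N * size d)%N; first by rewrite leq_pmulr.
by split => //; apply: term_ge0.
Qed.

End Wrap2.

Section Wrap3.
Local Open Scope classical_set_scope.
Local Open Scope ring_scope.

Lemma main_gap (R : realType) (X : Type) (Sigma : finType) (E : lgraph X Sigma)
  (F : seq (seq Sigma)) (Hdet : deterministic E) (dt : X -> seq Sigma) (M : nat)
  (dt_size : forall v, (size (dt v) <= M)%N)
  (dt_pos : forall v, (0 < size (dt v))%N)
  (dt_F : forall v, hasF F (dt v))
  (dt_loop : forall v, endv E v (dt v) = Some v) (M1 : (1 <= M)%N) :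
  exists L : nat, (0 < L)%N /\ forall x y (r : R), 0 <= r ->
    r <= ln (#|Sigma|.+1%:R : R) ->
    (forall N, exists2 n, (N <= n)%N & nwords (avoid (Lxy E x y) F) n != 0%N /\
        r <= ln (nwords (avoid (Lxy E x y) F) n)%:R / n%:R) ->
    (forall N, exists2 k, (N <= k)%N & nwords (Lxy E x y) k != 0%N /\
        r + L%:R^-1 <= ln (nwords (Lxy E x y) k)%:R / k%:R).
Proof.
set H := ln (#|Sigma|.+1%:R : R).
set c := 2 + ln (M.+1%:R : R) + (H + 1) * M%:R.
set L := (Num.truncn (expR c)).+1.
have L0 : (0 < L)%N by [].
have hL : c <= ln (L%:R : R).
  rewrite -{1}(expRK c) ler_ln ?posrE ?expR_gt0 ?ltr0n //.
  exact/ltW/truncnS_gt.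
exists L; split => // x y r r0 rH hyp N.
set T : R := 2 * L%:R * (M%:R + 2).
set n0 := (Num.truncn (2 * L%:R * (2 + ln T))).+1.
have [n Nn [an hn]] := hyp (maxn N n0).
have n0n : (n0 <= n)%N by apply: leq_trans Nn; rewrite leq_maxr.
have n1 : (1 <= n)%N by apply: leq_trans n0n.
have Nn' : (N <= n)%N by apply: leq_trans Nn; rewrite leq_maxl.
have [k [/andP[nk kn] ineq]] := count_main L dt_size dt_pos dt_F dt_loop Hdet x y n.
have hra : r * n%:R <= ln (nwords (avoid (Lxy E x y) F) n)%:R.
  by move: hn; rewrite ler_pdivlMr ?ltr0n.
have hnR : 2 * L%:R * (2 + ln T) <= (n%:R : R).
  apply/ltW/(lt_le_trans (truncnS_gt _)); rewrite ler_nat; exact: n0n.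
have a0 : (0 < nwords (avoid (Lxy E x y) F) n)%N by rewrite lt0n.
have [b0 hb] := real_core r0 rH L0 M1 n1 (leq_trunc_div n L) (ltn_ceil n L0) nk kn
  a0 ineq hra hL hnR.
have k0 : (0 < k)%N by apply: leq_trans nk.
exists k; first exact: leq_trans nk.
by split; [rewrite -lt0n | rewrite ler_pdivlMr ?ltr0n].
Qed.

End Wrap3.

Unset Implicit Arguments.

Theorem mainTheorem13 (R : realType) (X : Type) (Sigma : finType)
  (E : lgraph X Sigma) (F : seq (seq Sigma))
  (X_nonempty : inhabited X)
  (Hdet : deterministic E) (Hunif : uniformly_connected E)
  (HF_plus : forall w, w \in F -> w != [::])
  (HF_nonempty : F != [::])
  (Hdense : relatively_dense E F) :
  ereal_sup [set entropy R (avoid (Lxy E x y) F) | x in [set: X] & y in [set: X]]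
    < graph_entropy R E.
Proof.
Local Open Scope ring_scope.
Local Open Scope ereal_scope.
case: X_nonempty => x0.
move: Hunif => [_ [K HK]]; move: Hdense => [D Hd].
have dtE := dt_ex Hdet HK Hd HF_plus.
pose dt v := sval (cid (dtE v)).
have dtP v := svalP (cid (dtE v)).
set M := ((D + \max_(w <- F) size w) * K.+1)%N.
have dt_loop v : endv E v (dt v) = Some v by case: (dtP v).
have dt_pos v : (0 < size (dt v))%N by case: (dtP v).
have dt_size v : (size (dt v) <= M)%N by case: (dtP v).
have dt_F v : hasF F (dt v) by case: (dtP v).
have M1 : (1 <= M)%N by apply: leq_trans (dt_pos x0) (dt_size x0).
have [L [L0 gap]] := main_gap R Hdet dt_size dt_pos dt_F dt_loop M1.
set S := ereal_sup _.
set H := (ln (#|Sigma|.+1%:R : R))%R.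
have G0 : 0 <= graph_entropy R E.
  apply: (le_trans (cycle_entropy R Hdet (dt_loop x0) (dt_pos x0))).
  by apply: ereal_sup_ubound; exists x0 => //; exists x0.
have SH : S <= H%:E.
  by apply: ge_ereal_sup => _ [x _ [y _ <-]]; exact: entropy_le.
case Se : S => [s| |].
- set d : R := ((L%:R)^-1)%R.
  have d0 : (0 < d)%R by rewrite invr_gt0 ltr0n.
  have sH : (s <= H)%R by rewrite -lee_fin -Se.
  have H0 : (0 <= H)%R by rewrite ln_ge0 // ler1n.
  have : ((s - d / 2)%R%:E < S) by rewrite Se lte_fin; lra.
  move/ereal_sup_gt => [_ [x _ [y _ <-]] hxy].
  have inf := entropy_gt_to hxy.
  set r := Num.max (s - d / 2)%R 0%R.
  have r0 : (0 <= r)%R by rewrite le_max lexx orbT.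
  have rH : (r <= H)%R by rewrite ge_max H0 andbT; lra.
  have hyp : forall N, exists2 n, (N <= n)%N & nwords (avoid (Lxy E x y) F) n != 0%N /\
        (r <= ln (nwords (avoid (Lxy E x y) F) n)%:R / n%:R)%R.
    move=> N; have [n Nn [h1 h2]] := inf N; exists n => //; split => //.
    by rewrite ge_max (ltW h2) term_ge0.
  have hb := entropy_ge_of (gap x y r r0 rH hyp).
  have : (r + L%:R^-1)%R%:E <= graph_entropy R E.
    by apply: (le_trans hb); apply: ereal_sup_ubound; exists x => //; exists y.
  apply: lt_le_trans; rewrite lte_fin -/d.
  have : (s - d / 2 <= r)%R by rewrite le_max lexx.
  lra.
- by move: SH; rewrite Se.
- by apply: lt_le_trans G0; exact: ltNy0.
Qed.
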